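(* Let $N$ be a positive integer, $R\in\{0,\dots,N\}$, $n\in\{1,\dots,N\}$, and $r\in\{0,\dots,n\}$ with $R+n-N\le r\le R$. Let $\mathscr{A}=\{\vartheta\in\mathbb{Z}^+:r\le\vartheta\le R\}$, $\mathscr{B}=\{\vartheta\in\mathbb{Z}^+:R\le\vartheta\le r+N-n\}$, and $\widehat R=\min\{N,\lfloor(N+1)\frac rn\rfloor\}$. Then $\widehat R\in\mathscr{A}$ provided $\frac rn\le\frac RN$, and $\widehat R\in\mathscr{B}$ provided $\frac rn\ge\frac RN$.
   Context: $\mathbb{Z}^+$ denotes the set of nonnegative integers. *)

(* Defs.v *)
From mathcomp Require Import all_boot.
Definition Rhat (N n r : nat) : nat := minn N (((N + 1) * r) %/ n).
Definition setA (r R : nat) (t : nat) : Prop := r <= t <= R.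
Definition setB (N n r R : nat) (t : nat) : Prop := R <= t /\ (t + n <= r + N)%N.

(* Main.v *)
Require Import Defs.
From mathcomp Require Import all_boot.
From mathcomp Require Import zify.

Theorem lemma7 (N R n r : nat) :
  0 < N -> R <= N -> 1 <= n <= N -> r <= n -> R + n <= r + N -> r <= R ->
  (r * N <= R * n -> setA r R (Rhat N n r)) /\
  (R * n <= r * N -> setB N n r R (Rhat N n r)).
Proof.
move=> N0 RN /andP[n1 nN] rn h1 rR.
rewrite /setA /setB /Rhat.
have n0 : 0 < n by [].
have hge : forall k, k * n <= (N + 1) * r -> k <= (N + 1) * r %/ n.
  by move=> k hk; rewrite leq_divRL.
have hlt : forall k, (N + 1) * r < k * n -> (N + 1) * r %/ n < k.
  by move=> k hk; rewrite ltn_divLR.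
have [rlt|req] := ltnP r n.
- split => h.
  + apply/andP; split.
    * rewrite leq_min; apply/andP; split; first lia.
      apply: hge; nia.
    * rewrite geq_min; apply/orP; right.
      have := hlt (R + 1). nia.
  + split.
    * rewrite leq_min RN /=. apply: hge; nia.
    * have hq := hlt (r + N - n + 1).
      have : (N + 1) * r < (r + N - n + 1) * n.
        have -> : r + N - n + 1 = r + (N - n) + 1 by lia.
        nia.
      move=> /hq hq2.
      have : minn N ((N + 1) * r %/ n) <= (N + 1) * r %/ n by rewrite geq_minr. lia.
- have rN : r = n by lia.
  subst r. split => h.
  + apply/andP; split.
    * rewrite leq_min nN /=. apply: hge; nia.
    * have : minn N ((N + 1) * n %/ n) <= N by rewrite geq_minl. nia.
  + split.
    * rewrite leq_min RN /=. apply: hge; nia.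
    * have : minn N ((N + 1) * n %/ n) <= N by rewrite geq_minl. lia.
Qed.
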